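(* Let $f\in\mathcal O_{\mathbb C^3,0}$, let $F_n$ be a compact two-dimensional face of $\Gamma_+(f)$ and $F_{n'}$ another two-dimensional face (compact or not) with $F_n\cap F_{n'}=[p_1,p_2]$ an edge of $F_n$. Let $q_1,q_2$ be the integral points of $\partial F_n$ such that $[p_1,q_1]$ and $[p_2,q_2]$ are the primitive segments of $\partial F_n$ adjacent to $[p_1,p_2]$ (i.e. lying on the other edges of $F_n$ through $p_1$, resp. $p_2$), and set $\alpha_1=\ell_{n'}(q_1-p_1)$, $\alpha_2=\ell_{n'}(q_2-p_2)$. If $p_1$ is a regular vertex of $F_n$, then $\alpha_{n,n'}=\alpha_1$ and $\alpha_1\mid\alpha_2$.
   Context: $\Gamma_+(f)=\operatorname{conv}\bigcup_{p\in\operatorname{supp}f}(p+\mathbb R^3_{\ge0})$. For a two-dimensional face $F_m$ of $\Gamma_+(f)$, $\ell_m$ is the primitive integral linear function on $\mathbb R^3$ whose minimal set on $\Gamma_+(f)$ is $F_m$. $\alpha_{n,n'}$ is the content (gcd of coordinates) of the cross product $\ell_n\times\ell_{n'}$ of the coefficient vectors. The face $F_n$ is regarded as an integral polygon in the affine plane $H$ containing it with lattice $H\cap\mathbb Z^3$; a vertex is regular if the primitive lattice vectors along its two edges form a basis of that lattice; a segment is primitive if its endpoints are lattice points and it contains no other lattice point. *)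

(* Defs.v *)
From HB Require Import structures.
From mathcomp Require Import all_boot all_order all_algebra.
Set Implicit Arguments. Unset Strict Implicit. Unset Printing Implicit Defensive.
Import Order.TTheory GRing.Theory Num.Theory.
Local Open Scope ring_scope.

Definition intv (R : realFieldType) (p : 'rV[int]_3) : 'rV[R]_3 :=
  map_mx (fun z : int => z%:~R) p.

(* evaluation of a linear function with coefficient vector u at v *)
Definition dot (T : comNzRingType) (u v : 'rV[T]_3) : T :=
  \sum_(i < 3) u 0 i * v 0 i.

Definition cross (T : comNzRingType) (u v : 'rV[T]_3) : 'rV[T]_3 :=
  \row_(i < 3)
    (let c (j : nat) := u ord0 (inord j) in let d (j : nat) := v ord0 (inord j) in
     if val i == 0%N then c 1%N * d 2%N - c 2%N * d 1%N
     else if val i == 1%N then c 2%N * d 0%N - c 0%N * d 2%N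
     else c 0%N * d 1%N - c 1%N * d 0%N).

Definition content (u : 'rV[int]_3) : nat :=
  let c (j : nat) := absz (u ord0 (inord j)) in gcdn (gcdn (c 0%N) (c 1%N)) (c 2%N).

Definition primitive_vec (u : 'rV[int]_3) : Prop := content u = 1%N.

(* Gamma_+(f) = conv ( U_{p in supp f} (p + R^3_{>=0}) ),
   membership: x is a finite convex combination of points p_i + v_i
   with p_i in the support and v_i in R^3_{>=0}. *)
Definition newton (R : realFieldType) (S : 'rV[int]_3 -> Prop) (x : 'rV[R]_3) : Prop :=
  exists (n : nat) (p : 'I_n -> 'rV[int]_3) (v : 'I_n -> 'rV[R]_3) (lam : 'I_n -> R),
    [/\ forall k, S (p k),
        forall k j, 0 <= v k 0 j,
        forall k, 0 <= lam k,
        \sum_k lam k = 1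
      & x = \sum_k lam k *: (intv R (p k) + v k)].

Definition face (R : realFieldType) (S : 'rV[int]_3 -> Prop) (l : 'rV[int]_3)
  (x : 'rV[R]_3) : Prop :=
  newton S x /\ forall y, newton S y -> dot (intv R l) x <= dot (intv R l) y.

(* l is the primitive integral linear function of a two-dimensional face *)
Definition two_dim_face (R : realFieldType) (S : 'rV[int]_3 -> Prop) (l : 'rV[int]_3) : Prop :=
  primitive_vec l /\
  exists a b c : 'rV[R]_3,
    [/\ face S l a, face S l b, face S l c & cross (b - a) (c - a) != 0].

Definition compact_face (R : realFieldType) (S : 'rV[int]_3 -> Prop) (l : 'rV[int]_3) : Prop :=
  exists M : R, forall x : 'rV[R]_3, face S l x -> forall i, `|x 0 i| <= M.

Definition seg (R : realFieldType) (a b x : 'rV[R]_3) : Prop :=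
  exists t : R, [/\ 0 <= t, t <= 1 & x = (1 - t) *: a + t *: b].

Definition is_edge (R : realFieldType) (F : 'rV[R]_3 -> Prop) (a b : 'rV[R]_3) : Prop :=
  a != b /\ exists m : 'rV[R]_3,
    forall x, (F x /\ forall y, F y -> dot m x <= dot m y) <-> seg a b x.

Definition primitive_seg (R : realFieldType) (p q : 'rV[int]_3) : Prop :=
  p != q /\ forall z : 'rV[int]_3,
    seg (intv R p) (intv R q) (intv R z) -> z = p \/ z = q.

Definition adjacent_prim (R : realFieldType) (S : 'rV[int]_3 -> Prop) (l : 'rV[int]_3)
  (p p' q : 'rV[int]_3) : Prop :=
  primitive_seg R p q /\
  exists a b : 'rV[R]_3,
    [/\ is_edge (face S l) a b, seg a b (intv R p), seg a b (intv R q)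
      & ~ (forall x, seg a b x <-> seg (intv R p) (intv R p') x)].

Definition regular_vertex (R : realFieldType) (S : 'rV[int]_3 -> Prop) (l : 'rV[int]_3)
  (p : 'rV[int]_3) : Prop :=
  forall (a b a' b' : 'rV[R]_3) (u u' : 'rV[int]_3),
    is_edge (face S l) a b -> is_edge (face S l) a' b' ->
    seg a b (intv R p) -> seg a' b' (intv R p) ->
    ~ (forall x, seg a b x <-> seg a' b' x) ->
    seg a b (intv R u) -> seg a' b' (intv R u') ->
    primitive_seg R p u -> primitive_seg R p u' ->
    (forall m k : int, m *: (u - p) + k *: (u' - p) = 0 -> m = 0 /\ k = 0) /\
    (forall v : 'rV[int]_3, dot l v = 0 ->
       exists m k : int, v = m *: (u - p) + k *: (u' - p)).

(* Main.v *)
Require Import Defs.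
From HB Require Import structures.
From mathcomp Require Import all_boot all_order all_algebra ring zify.
Import Order.TTheory GRing.Theory Num.Theory.
Local Open Scope ring_scope.

Lemma dotE {T : comNzRingType} (u v : 'rV[T]_3) :
  dot u v = u 0 (inord 0) * v 0 (inord 0) + u 0 (inord 1) * v 0 (inord 1) + u 0 (inord 2) * v 0 (inord 2).
Proof.
rewrite /dot !big_ord_recr big_ord0 /= add0r.
by congr (_ + _ + _); congr (u 0 _ * v 0 _); apply: val_inj; rewrite /= inordK.
Qed.

Lemma crossE {T : comNzRingType} (u v : 'rV[T]_3) :
  [/\ cross u v 0 (inord 0) = u 0 (inord 1) * v 0 (inord 2) - u 0 (inord 2) * v 0 (inord 1),
      cross u v 0 (inord 1) = u 0 (inord 2) * v 0 (inord 0) - u 0 (inord 0) * v 0 (inord 2) &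
      cross u v 0 (inord 2) = u 0 (inord 0) * v 0 (inord 1) - u 0 (inord 1) * v 0 (inord 0)].
Proof. by rewrite !mxE /= !inordK. Qed.

Definition mk3 {T : Type} (x y z : T) : 'rV[T]_3 :=
  \row_(i < 3) (if val i == 0%N then x else if val i == 1%N then y else z).

Lemma mk3E {T : Type} (x y z : T) :
  [/\ mk3 x y z 0 (inord 0) = x, mk3 x y z 0 (inord 1) = y & mk3 x y z 0 (inord 2) = z].
Proof. by rewrite !mxE /= !inordK. Qed.

Lemma mat3P {T : Type} (u v : 'rV[T]_3) :
  u 0 (inord 0) = v 0 (inord 0) -> u 0 (inord 1) = v 0 (inord 1) ->
  u 0 (inord 2) = v 0 (inord 2) -> u = v.
Proof.
move=> h0 h1 h2; apply/matrixP => i j; rewrite [i]ord1.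
have -> : j = inord (val j) by rewrite inord_val.
by case: j => [[|[|[|k]]]] //= _.
Qed.

Lemma contentE (u : 'rV[int]_3) :
  (content u)%:Z = gcdz (gcdz (u 0 (inord 0)) (u 0 (inord 1))) (u 0 (inord 2)).
Proof. by []. Qed.

Lemma dotD {T : comNzRingType} (u v w : 'rV[T]_3) : dot u (v + w) = dot u v + dot u w.
Proof. rewrite !dotE !mxE; ring. Qed.
Lemma dotB {T : comNzRingType} (u v w : 'rV[T]_3) : dot u (v - w) = dot u v - dot u w.
Proof. rewrite !dotE !mxE; ring. Qed.
Lemma dotZ {T : comNzRingType} (u v : 'rV[T]_3) a : dot u (a *: v) = a * dot u v.
Proof. rewrite !dotE !mxE; ring. Qed.

Lemma key (a b e1 e2 : 'rV[int]_3) : content a = 1%N -> dot b e1 = 0 -> dot a e2 = 0 ->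
  0 <= dot b e2 ->
  (forall v, dot a v = 0 -> exists m k : int, v = m *: e1 + k *: e2) ->
  (content (cross a b))%:Z = dot b e2 /\ forall v, dot a v = 0 -> (dot b e2 %| dot b v)%Z.
Proof.
move=> ca be1 ae2 A0 dec.
have hd : forall v, dot a v = 0 -> (dot b e2 %| dot b v)%Z.
  move=> v /dec [m [k ->]]; rewrite dotD !dotZ be1 mulr0 add0r; exact: dvdz_mull.
split=> //.
set A := dot b e2.
case: (crossE a b) => c0 c1 c2.
set a0 := a 0 (inord 0) in c0 c1 c2; set a1 := a 0 (inord 1) in c0 c1 c2;
set a2 := a 0 (inord 2) in c0 c1 c2.
set b0 := b 0 (inord 0) in c0 c1 c2; set b1 := b 0 (inord 1) in c0 c1 c2;
set b2 := b 0 (inord 2) in c0 c1 c2.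
have [m0 m1 m2] := mk3E (0 : int) (- a2) a1.
have [n0 n1 n2] := mk3E a2 (0 : int) (- a0).
have [o0 o1 o2] := mk3E (- a1) a0 (0 : int).
have h0 : (A %| cross a b 0%R (inord 0))%Z.
  have := hd (mk3 (0:int) (- a2) a1); rewrite [dot a _]dotE [dot b (mk3 _ _ _)]dotE m0 m1 m2 c0 -/a0 -/a1 -/a2 -/b0 -/b1 -/b2.
  have -> : a0 * 0 + a1 * - a2 + a2 * a1 = 0 by ring.
  move=> /(_ erefl) H; suff -> : a1 * b2 - a2 * b1 = b0 * 0 + b1 * - a2 + b2 * a1 by []; ring.
have h1 : (A %| cross a b 0%R (inord 1))%Z.
  have := hd (mk3 a2 (0:int) (- a0)); rewrite [dot a _]dotE [dot b (mk3 _ _ _)]dotE n0 n1 n2 c1 -/a0 -/a1 -/a2 -/b0 -/b1 -/b2.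
  have -> : a0 * a2 + a1 * 0 + a2 * - a0 = 0 by ring.
  move=> /(_ erefl) H; suff -> : a2 * b0 - a0 * b2 = b0 * a2 + b1 * 0 + b2 * - a0 by []; ring.
have h2 : (A %| cross a b 0%R (inord 2))%Z.
  have := hd (mk3 (- a1) a0 (0:int)); rewrite [dot a _]dotE [dot b (mk3 _ _ _)]dotE o0 o1 o2 c2 -/a0 -/a1 -/a2 -/b0 -/b1 -/b2.
  have -> : a0 * - a1 + a1 * a0 + a2 * 0 = 0 by ring.
  move=> /(_ erefl) H; suff -> : a0 * b1 - a1 * b0 = b0 * - a1 + b1 * a0 + b2 * 0 by []; ring.
have hAd : (A %| (content (cross a b))%:Z)%Z by rewrite contentE !dvdz_gcd h0 h1 h2.
set d := (content (cross a b))%:Z in hAd *.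
have dc : [/\ (d %| cross a b 0%R (inord 0))%Z, (d %| cross a b 0%R (inord 1))%Z
   & (d %| cross a b 0%R (inord 2))%Z].
  by rewrite /d contentE; split; [apply: dvdz_trans (dvdz_gcdl _ _) (dvdz_gcdl _ _) |
    apply: dvdz_trans (dvdz_gcdl _ _) (dvdz_gcdr _ _) | apply: dvdz_gcdr].
case: dc; rewrite c0 c1 c2 => d0 d1 d2.
have ae : a0 * b0 + a1 * b1 + a2 * b2 = dot a b by rewrite dotE.
set v0 := e2 0 (inord 0); set v1 := e2 0 (inord 1); set v2 := e2 0 (inord 2).
have ae2' : a0 * v0 + a1 * v1 + a2 * v2 = 0 by rewrite -ae2 dotE.
have Ae : A = b0 * v0 + b1 * v1 + b2 * v2 by rewrite /A dotE.
have x0 : (d %| a0 * A)%Z.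
  have -> : a0 * A = (a0 * b1 - a1 * b0) * v1 + (a2 * b0 - a0 * b2) * (- v2)
     + (a0 * v0 + a1 * v1 + a2 * v2) * b0 by rewrite Ae; ring.
  by rewrite ae2' mul0r addr0 rpredD // dvdz_mulr.
have x1 : (d %| a1 * A)%Z.
  have -> : a1 * A = (a0 * b1 - a1 * b0) * (- v0) + (a1 * b2 - a2 * b1) * v2
     + (a0 * v0 + a1 * v1 + a2 * v2) * b1 by rewrite Ae; ring.
  by rewrite ae2' mul0r addr0 rpredD // dvdz_mulr.
have x2 : (d %| a2 * A)%Z.
  have -> : a2 * A = (a2 * b0 - a0 * b2) * v0 + (a1 * b2 - a2 * b1) * (- v1)
     + (a0 * v0 + a1 * v1 + a2 * v2) * b2 by rewrite Ae; ring.
  by rewrite ae2' mul0r addr0 rpredD // dvdz_mulr.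
have hdA : (d %| A)%Z.
  have <- : gcdz (gcdz (a0 * A) (a1 * A)) (a2 * A) = A.
    by rewrite -mulz_gcdl abszE (ger0_norm A0) -mulz_gcdl abszE (ger0_norm A0) -contentE ca mul1r.
  by rewrite !dvdz_gcd x0 x1 x2.
move: hdA hAd; rewrite /d /dvdz /= => h1' h2'.
apply: (etrans _ (gez0_abs A0)); congr Posz; apply/eqP; rewrite eqn_dvd; apply/andP; split; [exact: h1' | exact: h2'].
Qed.

Lemma intvE (R : realFieldType) (p : 'rV[int]_3) i : intv R p 0 i = (p 0 i)%:~R.
Proof. by rewrite mxE. Qed.

Lemma dot_intv (R : realFieldType) (l x : 'rV[int]_3) :
  dot (intv R l) (intv R x) = (dot l x)%:~R.
Proof. by rewrite !dotE !intvE !rmorphD !rmorphM. Qed.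

Lemma seg_l {R : realFieldType} (a b : 'rV[R]_3) : seg a b a.
Proof. by exists 0; rewrite ?lexx ?ler01 // subr0 scale1r scale0r addr0. Qed.
Lemma seg_r {R : realFieldType} (a b : 'rV[R]_3) : seg a b b.
Proof. by exists 1; rewrite ?lexx ?ler01 // subrr scale0r scale1r add0r. Qed.

Lemma edge_sub {R : realFieldType} {F : 'rV[R]_3 -> Prop} {a b x} :
  is_edge F a b -> seg a b x -> F x.
Proof. by move=> [_ [m hm]] /hm []. Qed.

Lemma face_eq {R : realFieldType} {S} {l x y : 'rV[int]_3} :
  face S l (intv R x) -> face S l (intv R y) -> dot l x = dot l y.
Proof.
move=> [nx hx] [ny hy]; apply: (@intr_inj R); rewrite -!dot_intv.
by apply/le_anti; rewrite hx ?hy.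
Qed.

Lemma prim_point (R : realFieldType) (p1 p2 : 'rV[int]_3) : p1 != p2 ->
  exists (u : 'rV[int]_3) (g : int),
   [/\ seg (intv R p1) (intv R p2) (intv R u), primitive_seg R p1 u, g != 0
     & g *: (u - p1) = p2 - p1].
Proof.
move=> np.
set w := p2 - p1.
set w0 := w 0 (inord 0); set w1 := w 0 (inord 1); set w2 := w 0 (inord 2).
have [u1 [v1 e1]] := Bezoutz w0 w1.
have [u2 [v2 e2]] := Bezoutz (gcdz w0 w1) w2.
set g := gcdz (gcdz w0 w1) w2 in e2.
have gnz : g != 0.
  apply/negP; rewrite /g !gcdz_eq0 => /andP [/andP [/eqP z0 /eqP z1] /eqP z2].
  move/negP: np; apply; apply/eqP; apply/esym/eqP; rewrite -subr_eq0; apply/eqP.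
  rewrite -/w; apply: mat3P; rewrite -/w0 -/w1 -/w2 ?z0 ?z1 ?z2 mxE //.
have dg : forall i : 'I_3, (g %| w 0%R i)%Z.
  move=> i; have -> : i = inord (val i) by rewrite inord_val.
  case: i => [[|[|[|k]]]] //= _.
  - exact: dvdz_trans (dvdz_gcdl _ _) (dvdz_gcdl _ _).
  - exact: dvdz_trans (dvdz_gcdl _ _) (dvdz_gcdr _ _).
  - exact: dvdz_gcdr.
pose w' (j : nat) := ((w 0%R (inord j)) %/ g)%Z.
have hw : forall j, w' j * g = w 0 (inord j) by move=> j; apply: divzK.
have bez : u2 * u1 * w' 0%N + u2 * v1 * w' 1%N + v2 * w' 2%N = 1.
  apply: (mulIf gnz); rewrite mul1r.
  have -> : (u2 * u1 * w' 0%N + u2 * v1 * w' 1%N + v2 * w' 2%N) * g =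
     u2 * (u1 * (w' 0%N * g) + v1 * (w' 1%N * g)) + v2 * (w' 2%N * g) by ring.
  by rewrite !hw -/w0 -/w1 -/w2 e1 e2.
set M := mk3 (w' 0%N) (w' 1%N) (w' 2%N).
have ME : forall j, (j < 3)%N -> M 0 (inord j) = w' j.
  by case=> [|[|[|k]]] // _; case: (mk3E (w' 0%N) (w' 1%N) (w' 2%N)).
have wE : forall j, w 0 (inord j) = p2 0 (inord j) - p1 0 (inord j).
  by move=> j; rewrite !mxE.
have gpos : 0 < g by rewrite lt0r gnz /g.
exists (p1 + M), g.
have uE : p1 + M - p1 = M by rewrite addrC addKr.
have uEnt : forall j, (j < 3)%N -> (p1 + M) 0 (inord j) = p1 0 (inord j) + w' j.
  by move=> j hj; rewrite [LHS]mxE ME.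
have pE : forall j, p2 0 (inord j) = p1 0 (inord j) + w' j * g.
  by move=> j; rewrite hw wE addrC subrK.
have gR : (g%:~R : R) != 0 by rewrite intr_eq0.
split=> //; last first.
- by rewrite uE; apply: mat3P; rewrite [LHS]mxE ME // mulrC hw.
- split.
  + apply/negP => /eqP e.
    have M0 : M = 0 by rewrite -uE -e subrr.
    have : w' 0%N = 0 /\ w' 1%N = 0 /\ w' 2%N = 0.
      by rewrite -!ME // M0 !mxE.
    move=> [z0 [z1 z2]]; move: bez; rewrite z0 z1 z2 !mulr0 !addr0 => /eqP.
    by rewrite eq_sym oner_eq0.
  + move=> z [t [t0 t1 ez]].
    have ent : forall j, (j < 3)%N ->
        (z 0 (inord j))%:~R = (p1 0 (inord j))%:~R + t * (w' j)%:~R :> R.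
      move=> j hj; have := congr1 (fun N : 'rV[R]_3 => N 0 (inord j)) ez.
      rewrite /= intvE => ->; rewrite mxE [(_ *: intv R p1) _ _]mxE [(_ *: intv R (p1 + M)) _ _]mxE !intvE uEnt //.
      rewrite rmorphD /=; ring.
    set n := u2 * u1 * (z 0 (inord 0) - p1 0 (inord 0)) + u2 * v1 * (z 0 (inord 1) - p1 0 (inord 1))
       + v2 * (z 0 (inord 2) - p1 0 (inord 2)).
    have nt : n%:~R = t :> R.
      transitivity (t * (u2 * u1 * w' 0%N + u2 * v1 * w' 1%N + v2 * w' 2%N)%:~R); last first.
        by rewrite bez mulr1.
      rewrite /n !(rmorphD, rmorphM, rmorphB) /= !ent //; ring.
    have n0 : 0 <= n by rewrite -(ler_int R) nt.
    have n1 : n <= 1 by rewrite -(ler_int R) nt.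
    have : n = 0 \/ n = 1 by lia.
    case=> hn; [left | right]; apply: mat3P; apply: (@intr_inj R);
      rewrite ent // -nt hn ?uEnt // ?rmorphD /=; ring.
- exists (g%:~R)^-1; split.
  + by rewrite invr_ge0 ler0z ltW.
  + by rewrite invf_le1 ?ltr0z // ler1z.
  + apply: mat3P; rewrite intvE uEnt // !mxE pE !(rmorphD, rmorphM) /=; by field; exact: gR.
Qed.


Theorem mainTheorem13 (R : realFieldType) (S : 'rV[int]_3 -> Prop)
  (hS : forall p, S p -> forall i, 0 <= p 0 i)
  (ln ln' p1 p2 q1 q2 : 'rV[int]_3) :
  two_dim_face R S ln -> compact_face R S ln ->
  two_dim_face R S ln' ->
  p1 != p2 ->
  (forall x : 'rV[R]_3,
     (face S ln x /\ face S ln' x) <-> seg (intv R p1) (intv R p2) x) ->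
  is_edge (face S ln) (intv R p1) (intv R p2) ->
  adjacent_prim R S ln p1 p2 q1 ->
  adjacent_prim R S ln p2 p1 q2 ->
  regular_vertex R S ln p1 ->
  ((content (cross ln ln'))%:Z = dot ln' (q1 - p1) /\
   (dot ln' (q1 - p1) %| dot ln' (q2 - p2))%Z).
Proof.
move=> [pln _] _ _ np12 Hint Hed [pq1 [a [b [Eab sp1 sq1 nab]]]]
  [pq2 [a2 [b2 [Eab2 sp2 sq2 _]]]] rv.
have [fp1 fp1'] := (Hint (intv R p1)).2 (seg_l _ _).
have [fp2 fp2'] := (Hint (intv R p2)).2 (seg_r _ _).
have fq1 := edge_sub Eab sq1.
have fq2 := edge_sub Eab2 sq2.
have lq1 : dot ln (q1 - p1) = 0 by rewrite dotB (face_eq fq1 fp1) subrr.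
have lq2 : dot ln (q2 - p2) = 0 by rewrite dotB (face_eq fq2 fp2) subrr.
have l'p : dot ln' (p2 - p1) = 0 by rewrite dotB (face_eq fp2' fp1') subrr.
have A0 : 0 <= dot ln' (q1 - p1).
  rewrite dotB subr_ge0 -(ler_int R) -!dot_intv; apply: fp1'.2; exact: fq1.1.
have [u [g [su pu gnz gE]]] := @prim_point R _ _ np12.
have l'u : dot ln' (u - p1) = 0.
  have : g * dot ln' (u - p1) = 0 by rewrite -dotZ gE.
  by move/eqP; rewrite mulf_eq0 (negbTE gnz) => /eqP.
have nab' : ~ (forall x, seg (intv R p1) (intv R p2) x <-> seg a b x).
  by move=> h; apply: nab => x; split => /h.
have [_ dec] := rv _ _ _ _ u q1 Hed Eab (seg_l _ _) sp1 nab' su sq1 pu pq1.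
have [k1 k2] := @key _ _ _ _ pln l'u lq1 A0 dec.
by split=> //; apply: k2.
Qed.
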